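(* Fix $\lambda\in[0,1)$, $p\in[0,1]$, $T>0$, and consider the coupled construction below on $\Omega=\Omega_W\times\Omega_U\times\Omega_0$. Let $\mathcal{C}$ be the set of $\omega\in\Omega$ such that $\lim_{N\to\infty}\sup_{t\in[0,T]}|W^N(\omega,t)-(1+\lambda)t|=0$ and $\lim_{N\to\infty}\frac1N\sum_{k=1}^N\mathbb{I}_{[a,b)}(U(\omega,k))=b-a$ for every $[a,b)\subset[0,1]$ with $a<b$. Assume there is $\mathbf{v}^0\in\overline{\mathcal{V}}^\infty$ such that $\lim_{N\to\infty}\|\mathbf{V}^N(\omega,0)-\mathbf{v}^0\|_w=0$ for all $\omega\in\mathcal{C}$. Then for every $\omega\in\mathcal{C}$, every subsequence of $(\mathbf{X}^N(\omega,\cdot))_{N\ge1}$ has a further subsequence $(\mathbf{X}^{N_i}(\omega,\cdot))$ converging to some $\mathbf{x}=(\mathbf{v},\mathbf{a},\mathbf{l},\mathbf{c})$, in the sense that $d^{\mathbb{Z}_+}(\mathbf{V}^{N_i},\mathbf{v})$, $d^{\mathbb{Z}_+}(\mathbf{A}^{N_i},\mathbf{a})$, $d^{\mathbb{Z}_+}(\mathbf{L}^{N_i},\mathbf{l})$, $d^{\mathbb{Z}_+}(\mathbf{C}^{N_i},\mathbf{c})$ all tend to $0$ as $i\to\infty$; moreover $\mathbf{v}(0)=\mathbf{v}^0$, $\mathbf{a}(0)=\mathbf{l}(0)=\mathbf{c}(0)=0$, and every scalar coordinate $\mathbf{x}_j$ of $\mathbf{x}$ satisfies $|\mathbf{x}_j(a)-\mathbf{x}_j(b)|\le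 L|a-b|$ for all $a,b\in[0,T]$, where $L>0$ is a constant independent of $\omega$, $\mathbf{x}$ and $T$.
   Context: $\mathcal{S}=\{\mathbf{s}\in[0,1]^{\mathbb{Z}_+}:1=\mathbf{s}_0\ge\mathbf{s}_1\ge\cdots\ge0\}$, $\overline{\mathcal{S}}^\infty=\{\mathbf{s}\in\mathcal{S}:\sum_{i\ge1}\mathbf{s}_i<\infty\}$, $\overline{\mathcal{V}}^\infty=\{\mathbf{v}:\mathbf{v}_i=\sum_{j\ge i}\mathbf{s}_j\ \forall i,\text{ for some }\mathbf{s}\in\overline{\mathcal{S}}^\infty\}$; $\|\mathbf{x}\|_w^2=\sum_{i\ge0}2^{-i}\mathbf{x}_i^2$; for $\mathbb{R}^{\mathbb{Z}_+}$-valued functions on $[0,T]$, $d^{\mathbb{Z}_+}(\mathbf{x},\mathbf{y})=\sup_{t\in[0,T]}\|\mathbf{x}(t)-\mathbf{y}(t)\|_w$. Coupled construction: on $(\Omega_W,\mathcal{F}_W,\mathbb{P}_W)$ let $W$ be a Poisson process of rate $1+\lambda$; on $(\Omega_U,\mathcal{F}_U,\mathbb{P}_U)$ let $U(k)$, $k\ge1$, be i.i.d. uniform on $[0,1]$; on $(\Omega_0,\mathcal{F}_0,\mathbb{P}_0)$ let $\mathbf{V}^{(0,N)}$, $N\ge1$, be random variables with values in $\overline{\mathcal{V}}^\infty$ whose coordinates are integer multiples of $1/N$; take the product space $\Omega$. Set $W^N(t)=W(Nt)/N$ and let $t_k$ be the $k$-th jump time of $W^N$. Put $\mathbf{V}^N(0)=\mathbf{V}^{(0,N)}$;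 the processes $\mathbf{A}^N_i,\mathbf{L}^N_i,\mathbf{C}^N_i$ ($i\ge1$) start at $0$ and are constant between jump times; at $t_k$: for each $i\ge1$ with $U(k)\in\frac{\lambda}{1+\lambda}[0,\mathbf{V}^N_{i-1}(t_k-)-\mathbf{V}^N_i(t_k-))$, $\mathbf{A}^N_i$ increases by $1/N$; for each $i\ge1$ with $U(k)\in\frac{\lambda}{1+\lambda}+\frac{1-p}{1+\lambda}[0,\mathbf{V}^N_i(t_k-)-\mathbf{V}^N_{i+1}(t_k-))$, $\mathbf{L}^N_i$ increases by $1/N$; if $U(k)\in[1-\frac{p}{1+\lambda},1)$, $\mathbf{C}^N_j$ increases by $1/N$ for all $1\le j\le \sup\{i:\mathbf{V}^N_i(t_k-)>0\}$. Then $\mathbf{V}^N_i(t)=\mathbf{V}^N_i(0)+\mathbf{A}^N_i(t)-\mathbf{L}^N_i(t)-\mathbf{C}^N_i(t)$ for $i\ge1$ and $\mathbf{V}^N_0=\mathbf{V}^N_1+1$. (This realizes the aggregate queue-length process of an $N$-station system with Poisson($\lambda$) arrivals per station, local service tokens of rate $1-p$ per station, and central service tokens of rate $Np$ serving a longest queue.) $\mathbf{X}^N=(\mathbf{V}^N,\mathbf{A}^N,\mathbf{L}^N,\mathbf{C}^N)$. *)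

(* Defs.v *)
From HB Require Import structures.
From mathcomp Require Import all_boot all_order all_algebra.
From mathcomp Require Import all_classical all_reals all_analysis.
Set Implicit Arguments. Unset Strict Implicit. Unset Printing Implicit Defensive.
Import Order.TTheory GRing.Theory Num.Theory.
Import numFieldNormedType.Exports.
Local Open Scope classical_set_scope.
Local Open Scope ring_scope.

Section QLB.
Variable R : realType.

Definition in_S (s : nat -> R) : Prop :=
  s 0%N = 1 /\ (forall i, s i.+1 <= s i) /\ (forall i, 0 <= s i <= 1).

Definition in_Sbar_inf (s : nat -> R) : Prop :=
  in_S s /\ cvgn (fun n => \sum_(1 <= i < n) s i).

Definition in_Vbar_inf (v : nat -> R) : Prop :=
  exists s, in_Sbar_inf s /\
    forall i, v i = limn (fun n => \sum_(i <= j < n) s j).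

Definition wnorm (x : nat -> R) : \bar R :=
  sqrte (\sum_(i <oo) ((2 ^+ i)^-1 * (x i) ^+ 2)%:E)%E.

Definition dZ (T : R) (x y : R -> nat -> R) : \bar R :=
  ereal_sup [set wnorm (fun i => x t i - y t i) | t in `[0, T]%classic].

(* literal set membership  u \in a + c [0, x)  *)
Definition in_scaled (u a c x : R) : Prop := exists y, 0 <= y < x /\ u = a + c * y.

Variables (lam p : R) (N : nat) (V0 : nat -> R) (U : nat -> R).

Definition Vof (A L C : nat -> R) (i : nat) : R :=
  if i is 0 then (V0 1%N + A 1%N - L 1%N - C 1%N) + 1
  else V0 i + A i - L i - C i.

Definition incrN (b : Prop) : R := if `[< b >] then N%:R^-1 else 0.

(* A, L, C after k jumps (indices i >= 1 are the paper's; index 0 stays 0) *)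
Fixpoint ALC (k : nat) : (nat -> R) * (nat -> R) * (nat -> R) :=
  match k with
  | 0 => (fun _ => 0, fun _ => 0, fun _ => 0)
  | k'.+1 =>
    let: (A, L, C) := ALC k' in
    let V := Vof A L C in
    let u := U k in
    (fun i => A i + incrN ((1 <= i)%N /\
         in_scaled u 0 (lam / (1 + lam)) (V i.-1 - V i)),
     fun i => L i + incrN ((1 <= i)%N /\
         in_scaled u (lam / (1 + lam)) ((1 - p) / (1 + lam)) (V i - V i.+1)),
     fun i => C i + incrN ((1 <= i)%N /\
         (1 - p / (1 + lam) <= u < 1) /\
         (* 1 <= i <= sup { j : V_j > 0 } *)
         (exists j, (i <= j)%N /\ 0 < V j)))
  end.

(* W : counting path of the rate-(1+lam) Poisson process; W(N t) = number of
   jumps of W^N up to time t, so X^N(t) is the state after W(N t) jumps. *)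
Variable W : R -> nat.

Definition Aproc (t : R) : nat -> R := (ALC (W (N%:R * t))).1.1.
Definition Lproc (t : R) : nat -> R := (ALC (W (N%:R * t))).1.2.
Definition Cproc (t : R) : nat -> R := (ALC (W (N%:R * t))).2.
Definition Vproc (t : R) : nat -> R := Vof (Aproc t) (Lproc t) (Cproc t).

End QLB.

Definition counting_path (R : realType) (tau : nat -> R) (W : R -> nat) : Prop :=
  tau 0%N = 0 /\ (forall k, tau k < tau k.+1) /\
  (forall s n, 0 <= s -> (W s = n <-> tau n <= s < tau n.+1)).

Definition Lipschitz_on (R : realType) (T L : R) (f : R -> R) : Prop :=
  forall a b, 0 <= a <= T -> 0 <= b <= T -> `|f a - f b| <= L * `|a - b|.

(* Main.v *)
Require Import Defs.
From HB Require Import structures.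
From mathcomp Require Import all_boot all_order all_algebra.
From mathcomp Require Import all_classical all_reals all_analysis.
From mathcomp Require Import ring lra.
Import Order.TTheory GRing.Theory Num.Theory.
Import numFieldNormedType.Exports.
Local Open Scope classical_set_scope.
Local Open Scope ring_scope.

Definition evn (P : nat -> Prop) := exists M, forall n, (M <= n)%N -> P n.

Lemma evnP (P : nat -> Prop) : (\forall n \near \oo, P n) <-> evn P.
Proof. split => [[M _ H]|[M H]]; [exists M => n /H | exists M]; done. Qed.

Lemma evn_and {P Q : nat -> Prop} : evn P -> evn Q -> evn (fun n => P n /\ Q n).
Proof.
move=> [M HM] [K HK]; exists (maxn M K) => n; rewrite geq_max => /andP[h1 h2].
by split; [apply: HM|apply: HK].
Qed.

Lemma evn_all (K : nat) (P : nat -> nat -> Prop) :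
  (forall j, (j < K)%N -> evn (P j)) -> evn (fun n => forall j, (j < K)%N -> P j n).
Proof.
elim: K => [|K IH] H; first by exists 0%N => n _ j.
have [M1 H1] := IH (fun j jK => H j (ltnW jK)).
have [M2 H2] := H K (ltnSn K).
exists (maxn M1 M2) => n; rewrite geq_max => /andP[h1 h2] j.
rewrite ltnS leq_eqVlt => /orP[/eqP->|jK]; first exact: H2.
exact: H1.
Qed.

Lemma evn_imp {P Q : nat -> Prop} : (forall n, P n -> Q n) -> evn P -> evn Q.
Proof. by move=> H [M HM]; exists M => n /HM /H. Qed.

Definition sincr (f : nat -> nat) := forall m n, (m < n)%N -> (f m < f n)%N.

Lemma sincr_succ f : (forall n, (f n < f n.+1)%N) -> sincr f.
Proof.
move=> H m n; elim: n => [//|n IH]; rewrite ltnS leq_eqVlt => /orP[/eqP->//|].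
by move=> /IH h; apply: ltn_trans h (H n).
Qed.

Lemma sincr_ge f : sincr f -> forall n, (n <= f n)%N.
Proof.
move=> H; elim=> [//|n IH]; exact: leq_ltn_trans IH (H _ _ (ltnSn n)).
Qed.

Lemma sincr_comp f g : sincr f -> sincr g -> sincr (f \o g).
Proof. by move=> Hf Hg m n /Hg /Hf. Qed.

Lemma sincr_id : sincr id. Proof. by move=> m n. Qed.

Lemma sincr_mono f : sincr f -> increasing_seq f.
Proof.
move=> H m n; change ((f m <= f n)%N = (m <= n)%N); case: (ltngtP m n) => [mn|nm|->]; last by rewrite !leqnn.
  by rewrite (ltnW (H _ _ mn)).
by rewrite leqNgt (H _ _ nm).
Qed.

Lemma mono_sincr f : increasing_seq f -> sincr f.
Proof.
move=> H m n; rewrite !ltnNge; have E : (f n <= f m)%N = (n <= m)%N by exact: H.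
by rewrite E.
Qed.

Lemma sincr_lt_inv f m n : sincr f -> (f m < f n)%N -> (m < n)%N.
Proof.
move=> H; case: (ltngtP m n) => // [/H/ltnW|->]; last by rewrite ltnn.
by rewrite leqNgt => /negbTE->.
Qed.

Arguments sincr_ge {f}. Arguments sincr_comp {f g}. Arguments mono_sincr {f}. Arguments sincr_mono {f}. Arguments sincr_lt_inv {f m n}.

Lemma subseq_cvg {T : topologicalType} (u : nat -> T) (l : T) psi :
  sincr psi -> u @ \oo --> l -> (u \o psi) @ \oo --> l.
Proof.
move=> Hp Hu; apply: cvg_comp Hu.
move=> A /evnP [M HM]; apply/evnP; exists M => n Mn; apply: HM.
by apply: (leq_trans Mn); apply: sincr_ge.
Qed.

Section Diag.
Variable R : realType.

Definition evbdd (u : nat -> R) := exists B, evn (fun n => `|u n| <= B).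

Lemma bw_ev {u : nat -> R} : evbdd u -> exists f, sincr f /\ cvgn (u \o f).
Proof.
move=> [B [M HM]].
have bnd : bounded_fun (fun n => u (n + M)%N).
  exists B; split; first by rewrite num_real.
  move=> x Bx y _ /=; rewrite (le_trans (HM _ (leq_addl _ _))) //; exact: ltW.
have [f fi fc] := bolzano_weierstrass bnd.
exists (fun n => (f n + M)%N); split => //.
move=> m n mn; rewrite ltn_add2r. exact: (mono_sincr fi _ _ mn).
Qed.

Lemma bw_opt (u : nat -> R) : exists f, sincr f /\ (evbdd u -> cvgn (u \o f)).
Proof.
have [b|nb] := pselect (evbdd u).
  by have [f [fi fc]] := bw_ev b; exists f.
by exists id; split => // /nb.
Qed.

Definition bwf u := proj1_sig (cid (bw_opt u)).
Lemma bwf_incr u : sincr (bwf u). Proof. by rewrite /bwf; case: cid => f []. Qed.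
Lemma bwf_cvg {u} : evbdd u -> cvgn (u \o bwf u).
Proof. by rewrite /bwf; case: cid => f []. Qed.

Lemma evbdd_sub {u f} : sincr f -> evbdd u -> evbdd (u \o f).
Proof.
move=> Hf [B [M HM]]; exists B; exists M => n Mn; apply: HM.
exact: leq_trans Mn (sincr_ge Hf n).
Qed.

Variable x : nat -> nat -> R.
Hypothesis hb : forall m, evbdd (x m).

Fixpoint sig k : nat -> nat := match k with
  | 0 => bwf (x 0)
  | k'.+1 => sig k' \o bwf (x k'.+1 \o sig k') end.

Lemma sig_incr k : sincr (sig k).
Proof. elim: k => [|k IH] /=; [exact: bwf_incr | exact: sincr_comp IH (bwf_incr _)]. Qed.

Lemma sig_cvg k : cvgn (x k \o sig k).
Proof.
case: k => [|k] /=; first exact: bwf_cvg.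
exact: (bwf_cvg (evbdd_sub (sig_incr k) (hb k.+1))).
Qed.

Lemma sig_ext k k' : (k <= k')%N -> exists h, sincr h /\ forall n, sig k' n = sig k (h n).
Proof.
elim: k' => [|k' IH]; first by rewrite leqn0 => /eqP->; exists id; split => //; exact: sincr_id.
rewrite leq_eqVlt => /orP[/eqP->|]; first by exists id; split => //; exact: sincr_id.
rewrite ltnS => /IH [h [hi he]].
exists (h \o bwf (x k'.+1 \o sig k')); split; first exact: sincr_comp hi (bwf_incr _).
by move=> n /=; rewrite he.
Qed.

Definition psi i := sig i i.

Lemma psi_incr : sincr psi.
Proof.
apply: sincr_succ => i; rewrite /psi /=.
apply: sig_incr; apply: leq_trans (sincr_ge (bwf_incr _) i.+1); exact: ltnSn.
Qed.

Lemma psi_cvg m : cvgn (x m \o psi).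
Proof.
have /cvg_ex [l' Hl'] := sig_cvg m.
apply/cvg_ex; exists l'; apply/cvgrPdist_le => e e0.
have [M HM] := (evnP _).1 ((cvgrPdist_le (x m \o sig m) l').1 Hl' e e0).
apply/evnP; exists (maxn M m) => i; rewrite geq_max => /andP[Mi mi].
have [h [hi he]] := @sig_ext m i mi; rewrite /= /psi he.
apply: HM; exact: (leq_trans Mi (sincr_ge hi i)).
Qed.

End Diag.
Arguments evbdd {R}.

Lemma diag_count (R : realType) (I : countType) (x : I -> nat -> R) :
  (forall k, evbdd (x k)) -> exists psi, sincr psi /\ forall k, cvgn (x k \o psi).
Proof.
move=> hb.
pose y m := if @unpickle I m is Some k then x k else (fun _ : nat => (0:R)).
have hy : forall m, evbdd (y m).
  move=> m; rewrite /y; case: unpickle => [k|]; first exact: hb.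
  by exists 0; exists 0%N => n _; rewrite normr0.
exists (@psi R y); split; first exact: psi_incr.
by move=> k; have := @psi_cvg R y hy (pickle k); rewrite /y pickleK.
Qed.


Definition grid {R : realType} (T : R) (d n : nat) : R := n%:R * (T / d.+1%:R).

Lemma grid_in {R : realType} (T : R) d n : 0 < T -> (n <= d.+1)%N -> 0 <= grid T d n <= T.
Proof.
move=> T0 nd; rewrite /grid; apply/andP; split.
  by apply: mulr_ge0 => //; apply: divr_ge0; [exact: ltW|].
rewrite mulrA ler_pdivrMr ?ltr0n // mulrC ler_wpM2l ?(ltW T0) //.
by rewrite ler_nat.
Qed.

Lemma norm4 (R : numDomainType) (w x y z : R) : `|w + x - y - z| <= `|w| + `|x| + `|y| + `|z|.
Proof.
apply: le_trans (ler_normB _ _) _; rewrite lerD2r.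
apply: le_trans (ler_normB _ _) _; rewrite lerD2r.
exact: ler_normD.
Qed.

Section Unif.
Variables (R : realType) (T L : R).
Hypotheses (hT : 0 < T) (hL : 0 <= L).
Variable Z : nat -> R -> R.
Hypothesis H1 : forall e, 0 < e -> evn (fun i => forall t s, 0 <= t <= T -> 0 <= s <= T ->
   `|Z i t - Z i s| <= L * `|t - s| + e).
Hypothesis Hg : forall d n, (n <= d.+1)%N -> cvgn (fun i => Z i (grid T d n)).

Lemma near_grid d t : 0 <= t <= T -> exists n, (n <= d.+1)%N /\ `|t - grid T d n| <= T / d.+1%:R.
Proof.
move=> /andP[t0 tT].
set h := T / d.+1%:R.
have h0 : 0 < h by rewrite /h divr_gt0 // ltr0n.
have tq0 : 0 <= t / h by rewrite divr_ge0 // ltW.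
have /andP[a b] := truncn_itv tq0.
set n := Num.truncn (t / h) in a b.
exists n; split.
  rewrite -(ler_nat R); apply: le_trans a _.
  have -> : d.+1%:R = T / h by rewrite /h invf_div mulrCA divff ?mulr1 // gt_eqF.
  by rewrite ler_wpM2r // invr_ge0 ltW.
rewrite ler_pdivlMr // in a; rewrite ltr_pdivrMr // in b.
rewrite /grid -/h ger0_norm; rewrite -natr1 mulrDl mul1r in b; lra.
Qed.

Lemma ucauchy e : 0 < e -> exists M, forall a b, (M <= a)%N -> (M <= b)%N ->
   forall t, 0 <= t <= T -> `|Z a t - Z b t| <= e.
Proof.
move=> e0; set e' := e / 5.
have e'0 : 0 < e' by rewrite divr_gt0.
have q0 : 0 <= L * T / e' by rewrite divr_ge0 // mulr_ge0 // ltW.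
have /andP[_ bd] := truncn_itv q0.
set d := Num.truncn (L * T / e') in bd.
have hd : L * (T / d.+1%:R) <= e'.
  rewrite ltr_pdivrMr // in bd; rewrite mulrA ler_pdivrMr ?ltr0n //.
  lra.
have Hgc : forall n, (n < d.+2)%N -> evn (fun i => `|Z i (grid T d n) - limn (fun j => Z j (grid T d n))| <= e' / 2).
  move=> n nd; have := @Hg d n nd => /cvg_ex [l Hl].
  rewrite (cvg_lim _ Hl) //.
  have e2 : 0 < e' / 2 by rewrite divr_gt0.
  have [M HM] := (evnP _).1 ((cvgrPdist_le _ l).1 Hl _ e2).
  by exists M => i /HM; rewrite distrC.
have [M1 HM1] := @evn_all d.+2 _ Hgc.
have [M2 HM2] := H1 _ e'0.
exists (maxn M1 M2) => a b; rewrite !geq_max => /andP[a1 a2] /andP[b1 b2] t tT.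
have [n [nd hn]] := near_grid d _ tT.
have gT := @grid_in _ T d n hT nd.
have := HM1 a a1 n nd; have := HM1 b b1 n nd.
have := HM2 a a2 t (grid T d n) tT gT; have := HM2 b b2 t (grid T d n) tT gT.
set g := grid T d n; set l := limn _.
have Lh : L * `|t - g| <= e' by apply: le_trans hd; rewrite ler_wpM2l.
move=> h1 h2 h3 h4.
have : `|Z a t - Z b t| <= `|Z a t - Z a g| + `|Z a g - l| + `|Z b g - l| + `|Z b t - Z b g|.
  have -> : Z a t - Z b t = (Z a t - Z a g) + (Z a g - l) - (Z b g - l) - (Z b t - Z b g) by ring.
  exact: norm4.
rewrite /e' in Lh h1 h2 h3 h4 *; lra.
Qed.

Lemma ucvg t : 0 <= t <= T -> cvgn (fun i => Z i t).
Proof.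
move=> tT; apply/cauchy_cvgP/cauchy_exP => e e0.
have e2 : 0 < e / 2 by rewrite divr_gt0.
have [M HM] := ucauchy _ e2.
exists (Z M t); apply/evnP; exists M => n Mn /=.
rewrite -ball_normE /ball_ /=.
by apply: le_lt_trans (HM _ _ (leqnn M) Mn _ tT) _; rewrite ltr_pdivrMr // ltr_pMr // ltr1n.
Qed.

Lemma uconv e : 0 < e -> evn (fun a => forall t, 0 <= t <= T ->
   `|Z a t - limn (fun i => Z i t)| <= e).
Proof.
move=> e0; have [M HM] := ucauchy _ e0; exists M => a Ma t tT.
apply/ler_addgt0Pr => dl dl0.
have /cvg_ex [l Hl] := ucvg _ tT; rewrite (cvg_lim _ Hl) //.
have [K HK] := (evnP _).1 ((cvgrPdist_le _ l).1 Hl _ dl0).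
have := HM a (maxn M K) Ma (leq_maxl _ _) t tT.
have := HK (maxn M K) (leq_maxr _ _).
move=> h1 h2; apply: le_trans (ler_distD (Z (maxn M K) t) _ _) _.
by rewrite distrC in h1; apply: lerD.
Qed.

Lemma ulip a b : 0 <= a <= T -> 0 <= b <= T ->
  `|limn (fun i => Z i a) - limn (fun i => Z i b)| <= L * `|a - b|.
Proof.
move=> aT bT; apply/ler_addgt0Pr => dl dl0.
have d3 : 0 < dl / 3 by rewrite divr_gt0.
have [M' HM'] := uconv _ d3.
have [K' HK'] := H1 _ d3.
set i := maxn M' K'.
have h1 := HM' i (leq_maxl _ _) a aT.
have h2 := HM' i (leq_maxl _ _) b bT.
have h3 := HK' i (leq_maxr _ _) a b aT bT.
set fa := limn _ in h1 *; set fb := limn _ in h2 *.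
have : `|fa - fb| <= `|Z i a - fa| + `|Z i a - Z i b| + `|Z i b - fb|.
  have -> : fa - fb = - (Z i a - fa) + (Z i a - Z i b) + (Z i b - fb) by ring.
  apply: le_trans (ler_normD _ _) _; rewrite lerD2r.
  by apply: le_trans (ler_normD _ _) _; rewrite normrN.
move: h1 h2 h3; set u := L * _; lra.
Qed.

End Unif.


Section Norms.
Variable R : realType.

Lemma sq_le (x e : R) : 0 <= e -> x ^+ 2 <= e ^+ 2 -> `|x| <= e.
Proof.
by move=> e0 h; rewrite -ler_sqr ?nnegrE // real_normK ?num_real.
Qed.

Lemma sq_of_abs (x a : R) : `|x| <= a -> x ^+ 2 <= a ^+ 2.
Proof.
move=> h; have a0 : 0 <= a := le_trans (normr_ge0 x) h.
by rewrite -real_normK ?num_real // ler_sqr ?nnegrE.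
Qed.

Lemma pw_ge0 j : 0 <= (2 ^- j : R).
Proof. by rewrite invr_ge0 exprn_ge0. Qed.

Lemma pwS j : (2 ^- j.+1 : R) = 2 ^- j / 2.
Proof. by rewrite exprS invfM mulrC. Qed.

Lemma sum_pw n : \sum_(0 <= j < n) (2 ^- j : R) = 2 - 2 * 2 ^- n.
Proof.
elim: n => [|n IH]; first by rewrite big_geq // expr0 invr1 mulr1 subrr.
rewrite big_nat_recr //= IH pwS; field; rewrite expf_neq0 // pnatr_eq0.
Qed.

Lemma sum_pw_tail J n : \sum_(0 <= j < n) (if (J <= j)%N then (2 ^- j : R) else 0) <= 2 * 2 ^- J.
Proof.
suff -> : \sum_(0 <= j < n) (if (J <= j)%N then (2 ^- j : R) else 0) =
   if (J <= n)%N then 2 * 2 ^- J - 2 * 2 ^- n else 0.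
  case: ifP => _; last by rewrite mulr_ge0 ?pw_ge0.
  by rewrite lerBlDr lerDl mulr_ge0 ?pw_ge0.
elim: n => [|n IH]; first by rewrite big_geq //; case: J => // ; rewrite subrr.
rewrite big_nat_recr //= IH.
case: (ltngtP J n) => [Jn|nJ|->].
- have -> : (J <= n.+1)%N by rewrite leqW // ltnW.
  by rewrite exprS; field; rewrite ?expf_neq0 // pnatr_eq0.
- case: leqP => h; last by rewrite addr0.
  have -> : J = n.+1 by apply/eqP; rewrite eqn_leq h nJ.
  by rewrite subrr addr0.
- rewrite ?leqnn ?ltnn ?leqW // ?add0r exprS; field; rewrite ?expf_neq0 // pnatr_eq0.
Qed.

Lemma wnorm_le {x : nat -> R} {c : R} : 0 <= c -> (wnorm x <= c%:E)%E ->
  forall n, \sum_(0 <= j < n) 2 ^- j * x j ^+ 2 <= c ^+ 2.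
Proof.
move=> c0 h n; rewrite /wnorm in h.
have : (sqrte (R:=R) (\sum_(0 <= i <oo) (2 ^- i * x i ^+ 2)%:E) <= sqrte ((c ^+ 2)%:E))%E.
  by rewrite EFin_expe sqrte_sqr gee0_abs // lee_fin.
rewrite lee_sqrt ?lee_fin ?exprn_ge0 // => h2.
rewrite -lee_fin -sumEFin; apply: le_trans h2.
apply: nneseries_lim_ge => k _ _; rewrite lee_fin mulr_ge0 ?pw_ge0 ?sqr_ge0 //.
Qed.

Lemma wnorm_ub (x : nat -> R) (c : R) : 0 <= c ->
  (forall n, \sum_(0 <= j < n) 2 ^- j * x j ^+ 2 <= c ^+ 2) -> (wnorm x <= c%:E)%E.
Proof.
move=> c0 h; rewrite /wnorm.
have -> : c%:E = sqrte ((c ^+ 2)%:E) by rewrite EFin_expe sqrte_sqr gee0_abs // lee_fin.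
rewrite lee_sqrt ?lee_fin ?exprn_ge0 //.
apply: lime_le.
  apply: is_cvg_nneseries => k _ _; rewrite lee_fin mulr_ge0 ?pw_ge0 //; exact: sqr_ge0.
by apply/evnP; exists 0%N => n _; rewrite sumEFin lee_fin.
Qed.

Lemma wnorm_ge0 (x : nat -> R) : (0 <= wnorm x)%E.
Proof. exact: sqrte_ge0. Qed.

Lemma ecvg0_le {u : nat -> \bar R} : u @ \oo --> 0%E -> forall c, 0 < c -> evn (fun i => (u i <= c%:E)%E).
Proof.
move=> /fine_cvgP [hf hc] c c0.
have [M HM] := (evnP _).1 ((cvgrPdist_le _ _).1 hc c c0).
have [K HK] := (evnP _).1 hf.
exists (maxn M K) => n; rewrite geq_max => /andP[a b].
have := HM n a; have := HK n b; rewrite /= sub0r normrN => fn h.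
by rewrite -(fineK fn) lee_fin; apply: le_trans (ler_norm _) h.
Qed.

Lemma ecvg0_of (u : nat -> \bar R) : (forall i, (0 <= u i)%E) ->
  (forall c, 0 < c -> evn (fun i => (u i <= c%:E)%E)) -> u @ \oo --> 0%E.
Proof.
move=> u0 h; apply/fine_cvgP; split.
  have [M HM] := h 1 ltr01; apply/evnP; exists M => n /HM hn.
  by rewrite ge0_fin_numE // (le_lt_trans hn) // ltry.
apply/cvgrPdist_le => c c0; have [M HM] := h c c0; apply/evnP; exists M => n /HM hn.
have fn : u n \is a fin_num by rewrite ge0_fin_numE // (le_lt_trans hn) // ltry.
rewrite /= sub0r normrN ger0_norm; last by rewrite fine_ge0.
by rewrite -lee_fin fineK.
Qed.

Lemma wnorm_coord (u : nat -> nat -> R) : (fun i => wnorm (u i)) @ \oo --> 0%E ->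
  forall j, (fun i => u i j) @ \oo --> 0.
Proof.
move=> h j; apply/cvgrPdist_le => e e0.
have c0 : 0 < e / 2 ^+ j by rewrite divr_gt0 // exprn_gt0.
have [M HM] := ecvg0_le h _ c0; apply/evnP; exists M => n /HM hn.
have := wnorm_le (ltW c0) hn j.+1; rewrite big_nat_recr //= => hs.
have hs' : 2 ^- j * u n j ^+ 2 <= (e / 2 ^+ j) ^+ 2.
  apply: le_trans hs; rewrite lerDr; apply: sumr_ge0 => k _.
  by rewrite mulr_ge0 ?pw_ge0 ?sqr_ge0.
rewrite sub0r normrN; apply: sq_le; first exact: ltW.
have p0 : 0 < (2 ^+ j : R) by rewrite exprn_gt0.
have p1 : 1 <= (2 ^+ j : R) by rewrite exprn_ege1 // ler1n.
have pn : (2 ^+ j : R) != 0 by rewrite gt_eqF.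
have -> : u n j ^+ 2 = 2 ^+ j * (2 ^- j * u n j ^+ 2) by field.
apply: le_trans (ler_wpM2l (ltW p0) hs') _.
have -> : 2 ^+ j * (e / 2 ^+ j) ^+ 2 = e ^+ 2 / 2 ^+ j by field.
by rewrite ler_pdivrMr // ler_peMr // sqr_ge0.
Qed.

End Norms.
Arguments sq_le {R x e}. Arguments sq_of_abs {R x a}. Arguments pw_ge0 {R}.
Arguments sum_pw {R}. Arguments sum_pw_tail {R}. Arguments wnorm_le {R x c}.
Arguments wnorm_ub {R x c}. Arguments wnorm_ge0 {R}. Arguments ecvg0_le {R u}.
Arguments ecvg0_of {R u}. Arguments wnorm_coord {R u}.


Section Proc.
Variables (R : realType) (T L : R).
Hypotheses (hT : 0 < T) (hL : 0 <= L).
Variables (Z : nat -> R -> nat -> R) (x0 : nat -> R).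
Hypothesis H1 : forall e, 0 < e -> evn (fun i => forall t s, 0 <= t <= T -> 0 <= s <= T ->
   forall j, `|Z i t j - Z i s j| <= L * `|t - s| + e).
Hypothesis H0 : (fun i => wnorm (fun j => Z i 0 j - x0 j)) @ \oo --> 0%E.
Hypothesis Hg : forall j d n, (n <= d.+1)%N -> cvgn (fun i => Z i (grid T d n) j).

Definition fl (t : R) (j : nat) : R := limn (fun i => Z i t j).

Let H1j j : forall e, 0 < e -> evn (fun i => forall t s, 0 <= t <= T -> 0 <= s <= T ->
   `|Z i t j - Z i s j| <= L * `|t - s| + e).
Proof. by move=> e e0; apply: evn_imp (H1 _ e0) => i h t s tT sT; apply: h. Qed.

Let Hgj j : forall d n, (n <= d.+1)%N -> cvgn (fun i => Z i (grid T d n) j).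
Proof. exact: Hg. Qed.

Lemma fl0 j : fl 0 j = x0 j.
Proof.
have h := wnorm_coord H0 j.
rewrite /fl; apply: cvg_lim => //; apply/cvgrPdist_le => e e0.
have [M HM] := (evnP _).1 ((cvgrPdist_le _ _).1 h e e0).
apply/evnP; exists M => n /HM; rewrite /= sub0r normrN => hn.
by rewrite distrC.
Qed.

Lemma fl_lip j : Lipschitz_on T L (fun t => fl t j).
Proof.
move=> a b aT bT; exact: (@ulip R T L hT hL _ (H1j j) (Hgj j) a b aT bT).
Qed.

Lemma fl_conv : (fun i => dZ T (Z i) fl) @ \oo --> 0%E.
Proof.
have T0 : (0:R) <= 0 <= T by rewrite lexx ltW.
apply: ecvg0_of.
  move=> i; apply: le_ereal_sup_tmp; exists (wnorm (fun j => Z i 0 j - fl 0 j)).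
    by exists 0 => //=; rewrite in_itv /=.
  exact: wnorm_ge0.
move=> c c0.
set K := 2 * L * T + 1.
have K0 : 0 <= K by rewrite /K addr_ge0 // !mulr_ge0 // ltW.
have [M1 HM1] := H1 _ ltr01.
have q0 : 0 <= 12 * K ^+ 2 / c ^+ 2.
  by apply: divr_ge0; [apply: mulr_ge0; [lra|exact: sqr_ge0]|exact: sqr_ge0].
have /andP[_ bJ] := truncn_itv q0.
set J := (Num.truncn _).+1 in bJ.
have c3 : 0 < c / 3 by rewrite divr_gt0.
have [M2 HM2] := @evn_all J (fun j i => forall t, 0 <= t <= T -> `|Z i t j - fl t j| <= c / 3)
   (fun j _ => @uconv R T L hT hL _ (H1j j) (Hgj j) _ c3).
have [M3 HM3] := ecvg0_le H0 _ c3.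
apply/evn_imp: (evn_and (evn_and (ex_intro _ M1 HM1) (ex_intro _ M2 HM2)) (ex_intro _ M3 HM3)).
move=> i [[h1 h2] h3].
apply: ge_ereal_sup => _ [t tT <-]; move: tT; rewrite /= in_itv /= => tT.
apply: wnorm_ub; first exact: ltW.
move=> n.
have hb0 := wnorm_le (ltW c3) h3 n.
set D := fun j => Z i t j - fl t j.
set D0 := fun j => Z i 0 j - x0 j.
have hD : forall j, `|D j| <= `|D0 j| + K.
  move=> j; have e1 := h1 t 0 tT T0 j; have e2 := fl_lip j t 0 tT T0.
  have -> : D j = D0 j + (Z i t j - Z i 0 j) - (fl t j - fl 0 j) by rewrite /D /D0 fl0; ring.
  apply: le_trans (ler_normB _ _) _; apply: le_trans (lerD (ler_normD _ _) (lexx _)) _.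
  rewrite -addrA lerD2l /K; rewrite subr0 in e1 e2.
  have : `|t| <= T by rewrite ger0_norm //; case/andP: tT.
  move: e1 e2; set a := `|Z _ _ _ - _|; set b := `|fl _ _ - _| => e1 e2 tT'.
  have : L * `|t| <= L * T by rewrite ler_wpM2l.
  lra.
have term : forall j, true -> 2 ^- j * D j ^+ 2 <=
    (c / 3) ^+ 2 * 2 ^- j + 2 * (2 ^- j * D0 j ^+ 2) + 2 * K ^+ 2 * (if (J <= j)%N then 2 ^- j else 0).
  move=> j _; have pj := @pw_ge0 R j.
  have hD0 : 0 <= 2 ^- j * D0 j ^+ 2 by rewrite mulr_ge0 ?sqr_ge0.
  case: (leqP J j) => Jj.
    have : D j ^+ 2 <= 2 * D0 j ^+ 2 + 2 * K ^+ 2.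
      apply: le_trans (sq_of_abs (hD j)) _.
      rewrite -(real_normK (num_real (D0 j))).
      have := sqr_ge0 (`|D0 j| - K); set y := `|D0 j|; nra.
    move=> hq; have := ler_wpM2l pj hq.
    have : 0 <= (c / 3) ^+ 2 * 2 ^- j by rewrite mulr_ge0 ?sqr_ge0.
    set u := 2 ^- j; lra.
  have : D j ^+ 2 <= (c / 3) ^+ 2 by apply: sq_of_abs; apply: h2.
  move=> hq; have := ler_wpM2l pj hq.
  have : 0 <= (c / 3) ^+ 2 * 2 ^- j by rewrite mulr_ge0 ?sqr_ge0.
  move: hD0; set u := 2 ^- j; lra.
apply: le_trans (ler_sum _ term) _.
rewrite !big_split /= -!mulr_sumr.
have s1 : \sum_(0 <= j < n) (2 ^- j : R) <= 2 by rewrite sum_pw lerBlDr lerDl mulr_ge0 ?pw_ge0.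
have s2 := @sum_pw_tail R J n.
have pJ : 2 ^- J * (12 * K ^+ 2) <= c ^+ 2.
  have J0 : (0 : R) < J%:R by rewrite ltr0n.
  have h2J : 2 ^- J <= (J%:R)^-1 :> R.
    rewrite lef_pV2 ?posrE ?exprn_gt0 //.
    by rewrite -natrX ler_nat ltnW // ltn_expl.
  rewrite ltr_pdivrMr ?exprn_gt0 // in bJ.
  apply: le_trans (ler_wpM2r _ h2J) _; first by rewrite mulr_ge0 ?sqr_ge0.
  rewrite mulrC ler_pdivrMr //; lra.
move: s1 s2 pJ hb0; set S1 := \sum_(_ <= _ < _) _; set S2 := \sum_(_ <= _ < _) _;
  set S3 := \sum_(_ <= _ < _) _.
have -> : (c / 3) ^+ 2 = c ^+ 2 / 9 by field.
have hS1 : 0 <= S1 by apply: sumr_ge0 => j _; exact: pw_ge0.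
move: hS1; set pJ := 2 ^- J; set c2 := c ^+ 2; set K2 := K ^+ 2.
have hc2 : 0 <= c2 by rewrite sqr_ge0.
have : 0 <= K2 by exact: sqr_ge0.
nra.
Qed.

End Proc.


Section Steps.
Variable R : realType.

Lemma incrN_bd N b : `|incrN R N b| <= N%:R^-1.
Proof.
rewrite /incrN; case: asboolP => _; last by rewrite normr0 invr_ge0.
by rewrite ger0_norm // invr_ge0.
Qed.

Lemma ALC_step (lam p : R) N V0 U k i :
  `|(ALC lam p N V0 U k.+1).1.1 i - (ALC lam p N V0 U k).1.1 i| <= N%:R^-1 /\
  `|(ALC lam p N V0 U k.+1).1.2 i - (ALC lam p N V0 U k).1.2 i| <= N%:R^-1 /\
  `|(ALC lam p N V0 U k.+1).2 i - (ALC lam p N V0 U k).2 i| <= N%:R^-1.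
Proof.
cbn [ALC]; case: (ALC lam p N V0 U k) => [[A L] C]; cbn [fst snd].
rewrite (addrC (A i)) (addrC (L i)) (addrC (C i)) !addrK.
by split; [|split]; exact: incrN_bd.
Qed.

Lemma lip_steps (X : nat -> R) c : (forall k, `|X k.+1 - X k| <= c) ->
  forall k k', `|X k - X k'| <= c * `|k%:R - k'%:R|.
Proof.
move=> h k k'; wlog le : k k' / (k <= k')%N.
  move=> H; case: (leqP k k') => [/H//|/ltnW /H].
  by rewrite distrC [`|k'%:R - _|]distrC.
rewrite -(subnKC le); elim: (k' - k)%N => [|m IH].
  by rewrite addn0 !subrr normr0 mulr0.
rewrite addnS; apply: le_trans (ler_distD (X (k + m)%N) _ _) _.
rewrite [`|X (k + m)%N - _|]distrC.
have -> : `|k%:R - (k + m).+1%:R| = `|k%:R - (k + m)%:R| + 1 :> R.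
  rewrite -natr1 natrD !opprD !addrA subrr !add0r -opprD !normrN.
  by rewrite !ger0_norm ?addr_ge0.
rewrite mulrDr mulr1; apply: lerD => //; exact: h.
Qed.

Definition stV lam p N V0 U k j : R :=
  Vof V0 (ALC lam p N V0 U k).1.1 (ALC lam p N V0 U k).1.2 (ALC lam p N V0 U k).2 j.

Lemma st_bd (lam p : R) N V0 U (sel : (nat -> R) * (nat -> R) * (nat -> R) -> nat -> R) :
  (forall k j, `|sel (ALC lam p N V0 U k.+1) j - sel (ALC lam p N V0 U k) j| <= N%:R^-1) ->
  forall k k' j, `|sel (ALC lam p N V0 U k) j - sel (ALC lam p N V0 U k') j| <=
       N%:R^-1 * `|k%:R - k'%:R|.
Proof. move=> h k k' j; exact: (@lip_steps (fun k => sel (ALC lam p N V0 U k) j) _ (fun k => h k j) k k'). Qed.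

Lemma stV_bd (lam p : R) N V0 U k k' j :
  `|stV lam p N V0 U k j - stV lam p N V0 U k' j| <= 3 * (N%:R^-1 * `|k%:R - k'%:R|).
Proof.
have hA := @st_bd lam p N V0 U (fun s => s.1.1) (fun k j => (ALC_step lam p N V0 U k j).1) k k'.
have hL := @st_bd lam p N V0 U (fun s => s.1.2) (fun k j => (ALC_step lam p N V0 U k j).2.1) k k'.
have hC := @st_bd lam p N V0 U (fun s => s.2) (fun k j => (ALC_step lam p N V0 U k j).2.2) k k'.
set q := N%:R^-1 * _ in hA hL hC *.
rewrite /stV /Vof; case: j => [|j].
  move: (hA 1%N) (hL 1%N) (hC 1%N); set a := (ALC _ _ _ _ _ k).1.1 1%N; set a' := (ALC _ _ _ _ _ k').1.1 1%N.
  set l := (ALC _ _ _ _ _ k).1.2 1%N; set l' := (ALC _ _ _ _ _ k').1.2 1%N.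
  set c := (ALC _ _ _ _ _ k).2 1%N; set c' := (ALC _ _ _ _ _ k').2 1%N => h1 h2 h3.
  have -> : V0 1%N + a - l - c + 1 - (V0 1%N + a' - l' - c' + 1) = (a - a') - (l - l') - (c - c') by ring.
  apply: le_trans (ler_normB _ _) _; apply: le_trans (lerD (ler_normB _ _) (lexx _)) _; lra.
move: (hA j.+1) (hL j.+1) (hC j.+1); set a := (ALC _ _ _ _ _ k).1.1 j.+1; set a' := (ALC _ _ _ _ _ k').1.1 j.+1.
set l := (ALC _ _ _ _ _ k).1.2 j.+1; set l' := (ALC _ _ _ _ _ k').1.2 j.+1.
set c := (ALC _ _ _ _ _ k).2 j.+1; set c' := (ALC _ _ _ _ _ k').2 j.+1 => h1 h2 h3.
have -> : V0 j.+1 + a - l - c - (V0 j.+1 + a' - l' - c') = (a - a') - (l - l') - (c - c') by ring.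
apply: le_trans (ler_normB _ _) _; apply: le_trans (lerD (ler_normB _ _) (lexx _)) _; lra.
Qed.

Lemma evn_sub (P : nat -> Prop) phi : sincr phi -> evn P -> evn (fun i => P (phi i)).
Proof.
move=> hp [M HM]; exists M => n Mn; apply: HM.
exact: (leq_trans Mn (sincr_ge hp n)).
Qed.

Lemma procH1 (W : R -> nat) (lam T : R) (X : nat -> R -> nat -> R) :
  0 <= lam < 1 ->
  (forall N t s j, `|X N t j - X N s j| <=
      3 * `|(W (N%:R * t))%:R / N%:R - (W (N%:R * s))%:R / N%:R|) ->
  (forall e, 0 < e -> evn (fun N => forall t, 0 <= t <= T ->
      `|(W (N%:R * t))%:R / N%:R - (1 + lam) * t| <= e)) ->
  forall e, 0 < e -> evn (fun N => forall t s, 0 <= t <= T -> 0 <= s <= T ->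
      forall j, `|X N t j - X N s j| <= 6 * `|t - s| + e).
Proof.
move=> /andP[l0 l1] hX hW e e0.
have e6 : 0 < e / 6 by rewrite divr_gt0.
apply: evn_imp (hW _ e6) => N h t s tT sT j.
apply: le_trans (hX N t s j) _.
have := h t tT; have := h s sT.
set a := (W (N%:R * t))%:R / N%:R; set b := (W (N%:R * s))%:R / N%:R => hb ha.
have : `|a - b| <= `|a - (1 + lam) * t| + `|(1 + lam) * t - (1 + lam) * s| + `|b - (1 + lam) * s|.
  have -> : a - b = (a - (1 + lam) * t) + ((1 + lam) * t - (1 + lam) * s) - (b - (1 + lam) * s) by ring.
  apply: le_trans (ler_normB _ _) _; rewrite lerD2r; exact: ler_normD.
rewrite -mulrBr normrM (ger0_norm (_ : 0 <= 1 + lam)); last lra.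
have : 0 <= `|t - s| by [].
move: ha hb; set u := `|t - s|; set v := `|a - _|; set w := `|b - _| => ha hb.
nra.
Qed.

Lemma W0 (tau : nat -> R) (W : R -> nat) : counting_path tau W -> W 0 = 0%N.
Proof.
move=> [t0 [tinc hW]].
have tpos : forall m, 0 < tau m.+1.
  elim=> [|m IH]; first by rewrite -t0 tinc.
  exact: lt_trans IH (tinc _).
have /andP[a _] := (hW 0 (W 0) (lexx 0)).1 erefl.
case E: (W 0) a => [//|m] a.
by have := lt_le_trans (tpos m) a; rewrite ltxx.
Qed.

Lemma proc_bdd (T L : R) (Y : nat -> R -> nat -> R) (x0 : nat -> R) : 0 < T -> 0 <= L ->
  (forall e, 0 < e -> evn (fun i => forall t s, 0 <= t <= T -> 0 <= s <= T ->
     forall j, `|Y i t j - Y i s j| <= L * `|t - s| + e)) ->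
  (fun i => wnorm (fun j => Y i 0 j - x0 j)) @ \oo --> 0%E ->
  forall t j, 0 <= t <= T -> evbdd (fun i => Y i t j).
Proof.
move=> hT hL H1 H0 t j tT.
have T0 : (0:R) <= 0 <= T by rewrite lexx ltW.
have h := wnorm_coord H0 j.
have [M HM] := (evnP _).1 ((cvgrPdist_le _ _).1 h 1 ltr01).
have [K HK] := H1 _ ltr01.
exists (`|x0 j| + 1 + (L * T + 1)); exists (maxn M K) => i; rewrite geq_max => /andP[a b].
have h1 := HM i a; have h2 := HK i b t 0 tT T0 j.
rewrite /= sub0r normrN in h1; rewrite subr0 in h2.
have : L * `|t| <= L * T by rewrite ler_wpM2l // ger0_norm; case/andP: tT.
have : `|Y i t j| <= `|Y i t j - Y i 0 j| + `|Y i 0 j - x0 j| + `|x0 j|.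
  have e : Y i t j = (Y i t j - Y i 0 j) + (Y i 0 j - x0 j) + x0 j by ring.
  rewrite {1}e.
  apply: le_trans (ler_normD _ _) _; rewrite lerD2r; exact: ler_normD.
lra.
Qed.

End Steps.


Arguments evn_sub {P phi}.
Arguments subseq_cvg {T u l psi}.
Arguments proc_bdd {R T L Y x0}.
Arguments procH1 {R W lam T X}.
Arguments fl_conv {R T L} hT hL {Z x0}.
Arguments fl0 {R Z x0}.
Arguments fl_lip {R T L} hT hL {Z}.
Arguments diag_count {R I x}.
Arguments W0 {R tau W}.
Arguments fl {R}.

Lemma divN_dist (R : realType) (N : nat) (a b : R) :
  N%:R^-1 * `|a - b| = `|a / N%:R - b / N%:R|.
Proof.
have h : (0:R) <= N%:R^-1 by rewrite invr_ge0.
by rewrite -mulrBl normrM (ger0_norm h) mulrC.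
Qed.

Lemma wnorm0 (R : realType) : wnorm (fun _ : nat => (0:R)) = 0%E.
Proof.
apply/eqP; rewrite eq_le wnorm_ge0 andbT.
apply: (@wnorm_ub R _ 0 (lexx 0)) => n.
by rewrite big1 // => j _; rewrite expr0n /= mulr0.
Qed.

Theorem proposition1 (R : realType) (lam p : R) :
  0 <= lam < 1 -> 0 <= p <= 1 ->
  exists L : R, 0 < L /\
  forall (T : R) (tau : nat -> R) (W : R -> nat) (U : nat -> R)
         (V0 : nat -> nat -> R) (v0 : nat -> R),
  0 < T ->
  (* W is a counting path (unit jumps at the times tau_1 < tau_2 < ...) *)
  counting_path tau W ->
  (* initial conditions V^{(0,N)} *)
  (forall N : nat, (1 <= N)%N ->
     in_Vbar_inf (V0 N) /\ (forall i, exists m : int, V0 N i = m%:~R / N%:R)) ->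
  (* omega in C : functional LLN for W^N *)
  (fun N : nat => ereal_sup
     [set (`|(W (N%:R * t))%:R / N%:R - (1 + lam) * t|)%:E | t in `[0, T]])
     @ \oo --> 0%E ->
  (* omega in C : equidistribution of U *)
  (forall a b : R, 0 <= a -> a < b -> b <= 1 ->
     (fun N : nat => N%:R^-1 * \sum_(1 <= k < N.+1) (if a <= U k < b then 1 else 0))
       @ \oo --> b - a) ->
  (* convergence of the initial condition *)
  in_Vbar_inf v0 ->
  (fun N : nat => wnorm (fun i => Vproc lam p N (V0 N) U W 0 i - v0 i)) @ \oo --> 0%E ->
  forall phi : nat -> nat, (forall m n, (m < n)%N -> (phi m < phi n)%N) -> (1 <= phi 0%N)%N ->
  exists psi : nat -> nat, (forall m n, (m < n)%N -> (psi m < psi n)%N) /\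
  exists v a l c : R -> nat -> R,
    let Ni := fun i => phi (psi i) in
    (fun i => dZ T (Vproc lam p (Ni i) (V0 (Ni i)) U W) v) @ \oo --> 0%E /\
    (fun i => dZ T (Aproc lam p (Ni i) (V0 (Ni i)) U W) a) @ \oo --> 0%E /\
    (fun i => dZ T (Lproc lam p (Ni i) (V0 (Ni i)) U W) l) @ \oo --> 0%E /\
    (fun i => dZ T (Cproc lam p (Ni i) (V0 (Ni i)) U W) c) @ \oo --> 0%E /\
    v 0 = v0 /\ a 0 = (fun _ => 0) /\ l 0 = (fun _ => 0) /\ c 0 = (fun _ => 0) /\
    (forall j : nat,
       Lipschitz_on T L (fun t => v t j) /\ Lipschitz_on T L (fun t => a t j) /\
       Lipschitz_on T L (fun t => l t j) /\ Lipschitz_on T L (fun t => c t j)).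
Proof.
move=> hlam hp; exists 6; split; first lra.
move=> T tau W U V0 v0 hT hcp hV0 hW hU hv0 hv0c phi hphi hphi0.
have hL : (0:R) <= 6 by lra.
have hWe : forall e, 0 < e -> evn (fun N => forall t, 0 <= t <= T ->
      `|(W (N%:R * t))%:R / N%:R - (1 + lam) * t| <= e).
  move=> e e0; apply: evn_imp (ecvg0_le hW _ e0) => N hN t tT.
  rewrite -lee_fin; apply: le_trans hN.
  by apply: ereal_sup_ubound; exists t => //=; rewrite in_itv /=.
pose sel (q : nat) : nat -> R -> nat -> R := match q with
  | 0 => fun N => Vproc lam p N (V0 N) U W
  | 1 => fun N => Aproc lam p N (V0 N) U W
  | 2 => fun N => Lproc lam p N (V0 N) U W
  | _ => fun N => Cproc lam p N (V0 N) U W end.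
pose x0s (q : nat) : nat -> R := if q is 0 then v0 else fun _ => 0.
have hX : forall q N t s j, `|sel q N t j - sel q N s j| <=
      3 * `|(W (N%:R * t))%:R / N%:R - (W (N%:R * s))%:R / N%:R|.
  move=> q N t s j; rewrite -divN_dist.
  have h3 : N%:R^-1 * `|(W (N%:R * t))%:R - (W (N%:R * s))%:R| <=
     3 * (N%:R^-1 * `|(W (N%:R * t))%:R - (W (N%:R * s))%:R| : R).
    rewrite ler_peMl // ?mulr_ge0 ?invr_ge0 //; lra.
  case: q => [|[|[|q]]] /=.
  - exact: stV_bd.
  - apply: le_trans h3.
    exact: (@st_bd R lam p N (V0 N) U (fun s => s.1.1) (fun k j => (ALC_step R lam p N (V0 N) U k j).1) (W (N%:R * t)) (W (N%:R * s)) j).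
  - apply: le_trans h3.
    exact: (@st_bd R lam p N (V0 N) U (fun s => s.1.2) (fun k j => (ALC_step R lam p N (V0 N) U k j).2.1) (W (N%:R * t)) (W (N%:R * s)) j).
  - apply: le_trans h3.
    exact: (@st_bd R lam p N (V0 N) U (fun s => s.2) (fun k j => (ALC_step R lam p N (V0 N) U k j).2.2) (W (N%:R * t)) (W (N%:R * s)) j).
have H1Y : forall q e, 0 < e -> evn (fun i => forall t s, 0 <= t <= T -> 0 <= s <= T ->
      forall j, `|sel q (phi i) t j - sel q (phi i) s j| <= 6 * `|t - s| + e).
  move=> q e e0; apply: (@evn_sub (fun N => forall t s, 0 <= t <= T -> 0 <= s <= T ->
      forall j, `|sel q N t j - sel q N s j| <= 6 * `|t - s| + e) phi hphi).
  exact: (procH1 hlam (hX q) hWe).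
have hW0 := W0 hcp.
have H0Y : forall q, (fun i => wnorm (fun j => sel q (phi i) 0 j - x0s q j)) @ \oo --> 0%E.
  case=> [|q]; first exact: (subseq_cvg hphi hv0c).
  have -> : (fun i => wnorm (fun j => sel q.+1 (phi i) 0 j - x0s q.+1 j)) = fun _ => 0%E.
    apply/funext => i; rewrite -(wnorm0 R); congr wnorm; apply/funext => j.
    case: q => [|[|q]]; by rewrite /= /Aproc /Lproc /Cproc mulr0 hW0 subrr.
  exact: cvg_cst.
pose xf (k : nat * nat * nat * nat) : nat -> R := let: (q, j, d, n) := k in
  fun i => sel q (phi i) (grid T d (minn n d.+1)) j.
have hb : forall k, evbdd (xf k).
  case=> [[[q j] d] n]; rewrite /xf.
  apply: (proc_bdd hT hL (H1Y q) (H0Y q)).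
  by apply: grid_in => //; exact: geq_minr.
have [psi [hpsi hcvg]] := diag_count hb.
pose Z q i := sel q (phi (psi i)).
have key : forall q, [/\ (fun i => dZ T (Z q i) (fl (Z q))) @ \oo --> 0%E,
     fl (Z q) 0 = x0s q & forall j, Lipschitz_on T 6 (fun t => fl (Z q) t j)].
  move=> q.
  have H1Z : forall e, 0 < e -> evn (fun i => forall t s, 0 <= t <= T -> 0 <= s <= T ->
      forall j, `|Z q i t j - Z q i s j| <= 6 * `|t - s| + e).
    move=> e e0; exact: (@evn_sub (fun i => forall t s, 0 <= t <= T -> 0 <= s <= T ->
      forall j, `|sel q (phi i) t j - sel q (phi i) s j| <= 6 * `|t - s| + e) psi hpsi (H1Y q e e0)).
  have H0Z := subseq_cvg hpsi (H0Y q).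
  have HgZ : forall j d n, (n <= d.+1)%N -> cvgn (fun i => Z q i (grid T d n) j).
    move=> j d n nd; have := hcvg (q, j, d, n); rewrite /xf /= (minn_idPl nd).
    by [].
  split.
  - exact: (fl_conv hT hL H1Z H0Z HgZ).
  - by apply/funext => j; apply: (fl0 H0Z).
  - by move=> j; apply: (fl_lip hT hL H1Z HgZ).
exists psi; split; first exact: hpsi.
have [k0a k0b k0c] := key 0%N.
have [k1a k1b k1c] := key 1%N.
have [k2a k2b k2c] := key 2%N.
have [k3a k3b k3c] := key 3%N.
exists (fl (Z 0%N)), (fl (Z 1%N)), (fl (Z 2%N)), (fl (Z 3%N)) => Ni.
split; first exact: k0a.
split; first exact: k1a.
split; first exact: k2a.
split; first exact: k3a.
split; first exact: k0b.
split; first exact: k1b.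
split; first exact: k2b.
split; first exact: k3b.
by move=> j; split; [|split; [|split]].
Qed.
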